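(* Suppose that for all positive integers $s,t,k$ with $st \le k^2$ one has $R(s,t) \le R(k,k)$. Suppose moreover that the limit $\lim_{k \to \infty} \frac{\log(R(k,k))}{k}$ exists and equals $\mathcal{L}$. Then \[ f(n) = \big(\mathcal{L}^2 + o(1)\big)\frac{n}{(\log n)^2}, \] that is, $\lim_{n\to\infty} \frac{(\log n)^2}{n} f(n) = \mathcal{L}^2$.
   Context: All logarithms are in base 2. For positive integers $s,t$, the Ramsey number $R(s,t)$ is the minimum $n$ such that every red/blue edge-coloring of the complete graph $K_n$ contains a red clique on $s$ vertices or a blue clique on $t$ vertices. For a graph $G$, $\chi(G)$ is its chromatic number and $\omega(G)$ its clique number. For $n \in \mathbb{N}$, $f(n)$ is the maximum of $\chi(G)/\omega(G)$ over all graphs $G$ on $n$ vertices. Here $o(1)$ denotes a quantity tending to $0$ as $n \to \infty$. *)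

(* Defs.v *)
From HB Require Import structures.
From mathcomp Require Import all_boot all_order all_algebra.
From mathcomp Require Import boolp classical_sets reals topology normedtype sequences exp.
Set Implicit Arguments. Unset Strict Implicit. Unset Printing Implicit Defensive.
Import Order.TTheory GRing.Theory Num.Theory numFieldNormedType.Exports.

(* Least natural number satisfying P (a classical, possibly undecidable
   predicate); 0 if no such number exists (never used in that case). *)
Definition least_nat (P : nat -> Prop) : nat :=
  match pselect (exists n, P n) with
  | left h => ex_minn (P := fun n => `[< P n >]) (let: ex_intro n Pn := h in
                        ex_intro _ n (asboolT Pn))
  | right _ => 0
  end.

(* A red/blue edge-colouring of K_n: a symmetric c : 'I_n -> 'I_n -> bool,
   the edge {i,j} (i != j) is red iff c i j = true, blue otherwise. *)
Definition ramsey_prop (s t n : nat) : Prop :=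
  forall c : 'I_n -> 'I_n -> bool, (forall i j, c i j = c j i) ->
  exists S : {set 'I_n},
    (#|S| = s /\ forall i j, i \in S -> j \in S -> i != j -> c i j) \/
    (#|S| = t /\ forall i j, i \in S -> j \in S -> i != j -> ~~ c i j).

Definition Ramsey (s t : nat) : nat := least_nat (ramsey_prop s t).

Definition simple_graph n (G : {ffun 'I_n -> {ffun 'I_n -> bool}}) : bool :=
  [forall i, ~~ G i i] && [forall i, forall j, G i j == G j i].

Definition proper_colouring n k (G : {ffun 'I_n -> {ffun 'I_n -> bool}})
    (c : 'I_n -> 'I_k) : Prop :=
  forall i j, G i j -> c i != c j.

Definition chi n (G : {ffun 'I_n -> {ffun 'I_n -> bool}}) : nat :=
  least_nat (fun k => exists c : 'I_n -> 'I_k, proper_colouring G c).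

Definition is_clique n (G : {ffun 'I_n -> {ffun 'I_n -> bool}}) (S : {set 'I_n}) : bool :=
  [forall i in S, forall j in S, (i != j) ==> G i j].

Definition omega n (G : {ffun 'I_n -> {ffun 'I_n -> bool}}) : nat :=
  \max_(S : {set 'I_n} | is_clique G S) #|S|.

Local Open Scope ring_scope.

Definition fratio (R : realType) (n : nat) : R :=
  \big[Num.max/0]_(G : {ffun 'I_n -> {ffun 'I_n -> bool}} | simple_graph G)
     ((chi G)%:R / (omega G)%:R).

Definition log2 (R : realType) (x : R) : R := ln x / ln 2.

(* Main.v *)
Require Import Defs.
From HB Require Import structures.
From mathcomp Require Import all_boot all_order all_algebra.
From mathcomp Require Import boolp zify.
Import Order.TTheory GRing.Theory Num.Theory.
Set Implicit Arguments. Unset Strict Implicit. Unset Printing Implicit Defensive.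

Lemma least_natP (P : nat -> Prop) : (exists n, P n) ->
  P (least_nat P) /\ forall m, P m -> (least_nat P <= m)%N.
Proof.
move=> ex; rewrite /least_nat; case: pselect => [h|//].
case: ex_minnP => m /asboolP Pm Hmin; split => // k Pk.
by apply: Hmin; apply/asboolP.
Qed.

Lemma subset_card (T : finType) (A : {set T}) k : (k <= #|A|)%N ->
  exists B : {set T}, B \subset A /\ #|B| = k.
Proof.
move=> hk; exists [set x in take k (enum A)]; split.
  by apply/subsetP => x; rewrite inE => /mem_take; rewrite mem_enum.
rewrite cardsE; move/card_uniqP: (take_uniq k (enum_uniq (mem A))) => ->.
by rewrite size_take -cardE; case: ltngtP hk => //= ->.
Qed.

Definition redc (T : finType) (c : T -> T -> bool) (S : {set T}) :=
  forall i j, i \in S -> j \in S -> i != j -> c i j.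
Definition bluec (T : finType) (c : T -> T -> bool) (S : {set T}) :=
  forall i j, i \in S -> j \in S -> i != j -> ~~ c i j.

Lemma ramsey_set (T : finType) (c : T -> T -> bool) :
  (forall i j, c i j = c j i) ->
  forall s t (U : {set T}), ('C(s + t, s) <= #|U|)%N ->
  exists S : {set T}, S \subset U /\
   ((#|S| = s /\ redc c S) \/ (#|S| = t /\ bluec c S)).
Proof.
move=> csym; elim=> [|s IHs] t U hU.
  by exists set0; rewrite sub0set cards0; split=> //; left; split=> // i j; rewrite inE.
elim: t U hU => [|t IHt] U hU.
  by exists set0; rewrite sub0set cards0; split=> //; right; split=> // i j; rewrite inE.
have : (0 < #|U|)%N by apply: leq_trans hU; rewrite bin_gt0 leq_addr.
case/card_gt0P => v vU.
pose Rn := [set u in U :\ v | c v u]; pose Bn := [set u in U :\ v | ~~ c v u].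
have hsum : (#|Rn| + #|Bn| = #|U| - 1)%N.
  rewrite (cardsD1 v U) vU add1n subn1 /= -[X in _ = X](cardsID [set u | c v u] (U :\ v)).
  by congr (_ + _); apply: eq_card => x; rewrite !inE // andbC.
have hC : 'C(s.+1 + t.+1, s.+1) = ('C(s + t.+1, s) + 'C(s.+1 + t, s.+1))%N.
  by rewrite addSn binS addnC addnS addSn addnC.
have [hR|hR] := leqP 'C(s + t.+1, s) #|Rn|.
  have [S [SR [[cS rS]|[cS bS]]]] := IHs _ _ hR.
  - have vS : v \notin S by apply/negP => /(subsetP SR); rewrite !inE eqxx.
    exists (v |: S); split.
      apply/subsetP => x; rewrite in_setU1 => /orP[/eqP->//|/(subsetP SR)].
      by rewrite !inE => /andP[/andP[]].
    left; split; first by rewrite cardsU1 vS cS.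
    move=> i j; rewrite !in_setU1 => /orP[/eqP->|iS] /orP[/eqP->|jS] ij.
    + by rewrite eqxx in ij.
    + by move/(subsetP SR): jS; rewrite !inE => /andP[].
    + by move/(subsetP SR): iS; rewrite !inE csym => /andP[].
    + exact: rS.
  - exists S; split; last by right.
    apply/subsetP => x /(subsetP SR); rewrite !inE => /andP[/andP[]]//.
have hB : ('C(s.+1 + t, s.+1) <= #|Bn|)%N.
  rewrite leqNgt; apply/negP => hB.
  rewrite hC in hU; lia.
have [S [SB [[cS rS]|[cS bS]]]] := IHt _ hB.
- exists S; split; last by left.
  apply/subsetP => x /(subsetP SB); rewrite !inE => /andP[/andP[]]//.
- have vS : v \notin S by apply/negP => /(subsetP SB); rewrite !inE eqxx.
  exists (v |: S); split.
    apply/subsetP => x; rewrite in_setU1 => /orP[/eqP->//|/(subsetP SB)].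
    by rewrite !inE => /andP[/andP[]].
  right; split; first by rewrite cardsU1 vS cS.
  move=> i j; rewrite !in_setU1 => /orP[/eqP->|iS] /orP[/eqP->|jS] ij.
  + by rewrite eqxx in ij.
  + by move/(subsetP SB): jS; rewrite !inE => /andP[].
  + by move/(subsetP SB): iS; rewrite !inE csym => /andP[].
  + exact: bS.
Qed.

Lemma ramsey_prop_binom s t : ramsey_prop s t 'C(s + t, s).
Proof.
move=> c csym.
have hU : ('C(s + t, s) <= #|[set: ordinal ('C(s + t, s))]|)%N by rewrite cardsT card_ord.
have [S [_ H]] := @ramsey_set _ c csym s t _ hU.
by exists S.
Qed.

Lemma Ramsey_spec s t : ramsey_prop s t (Ramsey s t) /\
  forall m, ramsey_prop s t m -> (Ramsey s t <= m)%N.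
Proof. apply: least_natP; exists 'C(s + t, s); exact: ramsey_prop_binom. Qed.

Lemma ramsey_transfer s t m (T : finType) (c : T -> T -> bool) :
  (forall i j, c i j = c j i) -> ramsey_prop s t m ->
  forall U : {set T}, (m <= #|U|)%N ->
  exists S : {set T}, S \subset U /\
   ((#|S| = s /\ redc c S) \/ (#|S| = t /\ bluec c S)).
Proof.
move=> csym hm U hU.
pose f (i : 'I_m) : T := enum_val (widen_ord hU i).
have finj : injective f.
  by move=> i j /enum_val_inj /(congr1 val) /= /val_inj.
have fU i : f i \in U by apply: (enum_valP (widen_ord hU i)).
have [S' HS'] := hm (fun i j => c (f i) (f j)) (fun i j => csym _ _).
exists (f @: S'); split.
  by apply/subsetP => x /imsetP[i _ ->].
rewrite (card_imset _ finj).
case: HS' => [[cS rS]|[cS bS]]; [left|right]; split=> //.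
- move=> x y /imsetP[i iS ->] /imsetP[j jS ->] ij; apply: rS => //.
  by apply: contra ij => /eqP->.
- move=> x y /imsetP[i iS ->] /imsetP[j jS ->] ij; apply: bS => //.
  by apply: contra ij => /eqP->.
Qed.

Lemma Ramsey_use s t (T : finType) (c : T -> T -> bool) :
  (forall i j, c i j = c j i) ->
  forall U : {set T}, (Ramsey s t <= #|U|)%N ->
  exists S : {set T}, S \subset U /\
   ((#|S| = s /\ redc c S) \/ (#|S| = t /\ bluec c S)).
Proof. move=> csym; apply: ramsey_transfer => //; exact: (Ramsey_spec s t).1. Qed.

Section Graphs.
Variable n : nat.
Implicit Types G : {ffun 'I_n -> {ffun 'I_n -> bool}}.
Implicit Types S : {set 'I_n}.

Lemma simple_irr G : simple_graph G -> forall i, ~~ G i i.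
Proof. by case/andP => /forallP H _. Qed.

Lemma simple_sym G : simple_graph G -> forall i j, G i j = G j i.
Proof. by case/andP => _ /forallP H i j; move/forallP: (H i) => /(_ j) /eqP. Qed.

Definition colorable G (U : {set 'I_n}) q := exists c : 'I_n -> nat,
  (forall i, i \in U -> (c i < q)%N) /\
  (forall i j, i \in U -> j \in U -> G i j -> c i != c j).

Definition indep G (S : {set 'I_n}) := forall i j, i \in S -> j \in S -> ~~ G i j.

Lemma col_small G U : simple_graph G -> colorable G U #|U|.
Proof.
move=> sG; exists (fun i => index i (enum U)); split.
  by move=> i iU; rewrite cardE index_mem mem_enum.
move=> i j iU jU Gij; apply/negP => /eqP e.
have : nth i (enum U) (index i (enum U)) = nth i (enum U) (index j (enum U)) by rewrite e.
rewrite !nth_index ?mem_enum // => eij.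
by move: Gij; rewrite eij (negbTE (simple_irr sG j)).
Qed.

Lemma col_greedy G t M : simple_graph G -> (0 < t)%N ->
  (forall U : {set 'I_n}, (M <= #|U|)%N -> exists I : {set 'I_n}, I \subset U /\ #|I| = t /\ indep G I) ->
  forall U : {set 'I_n}, exists q, (q * t <= #|U| + M * t)%N /\ colorable G U q.
Proof.
move=> sG tpos HM U.
elim: {U}#|U|.+1 {-2}U (ltnSn #|U|) => // N IH U hU.
have [small|big] := ltnP #|U| M.
  exists #|U|; split; last exact: col_small.
  by apply: leq_trans (leq_addl _ _); rewrite leq_mul2r ltnW ?orbT.
have [I [IU [cI iI]]] := HM U big.
have cU' : #|U :\: I| = (#|U| - t)%N by rewrite cardsD (setIidPr IU) cI.
have IUc := subset_leq_card IU.
have hlt : (#|U :\: I| < N)%N by rewrite cU'; rewrite cI in IUc; lia.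
have [q [hq [c [cb cp]]]] := IH (U :\: I) hlt.
exists q.+1; split.
  by rewrite mulSn; move: hq; rewrite cU'; lia.
exists (fun i => if i \in I then q else c i); split.
  move=> i iU; case: ifP => iI'; first by [].
  by apply: leq_trans (cb i _) _; rewrite ?inE ?iI' ?iU.
move=> i j iU jU Gij.
case: ifP => iI'; case: ifP => jI'.
- by move: (iI i j iI' jI'); rewrite Gij.
- by rewrite neq_ltn cb ?orbT // inE jI' jU.
- by rewrite neq_ltn cb // inE iI' iU.
- by apply: cp => //; rewrite inE ?iI' ?jI' ?iU ?jU.
Qed.

Lemma chi_le G q : colorable G [set: 'I_n] q -> (chi G <= q)%N.
Proof.
case=> c [cb cp].
have P : exists c' : 'I_n -> 'I_q, proper_colouring G c'.
  exists (fun i => Ordinal (cb i (in_setT i))) => i j Gij.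
  by apply: (cp i j (in_setT i) (in_setT j) Gij).
have [_ H] := @least_natP (fun k => exists c : 'I_n -> 'I_k, proper_colouring G c) (ex_intro _ q P).
exact: H.
Qed.

Lemma chi_spec G : simple_graph G ->
  exists c : 'I_n -> 'I_(chi G), proper_colouring G c.
Proof.
move=> sG.
have P : exists k, exists c : 'I_n -> 'I_k, proper_colouring G c.
  exists n, id => i j Gij; apply/negP => /eqP e.
  by move: Gij; rewrite e (negbTE (simple_irr sG j)).
exact: (least_natP P).1.
Qed.

Lemma chi_lower G j : simple_graph G ->
  (forall S, indep G S -> (#|S| <= j)%N) -> (n <= chi G * j)%N.
Proof.
move=> sG Hj; have [c cp] := chi_spec sG.
rewrite -[X in (X <= _)%N]card_ord -sum1_card.
rewrite (partition_big c xpredT) //=.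
rewrite -[X in (_ <= X * _)%N]card_ord -sum_nat_const.
apply: leq_sum => k _.
rewrite sum1_card.
have -> : #|[pred i | c i == k]| = #|[set i | c i == k]| by rewrite cardsE.
apply: Hj => x y; rewrite !inE => /eqP cx /eqP cy.
by apply/negP => /cp; rewrite cx cy eqxx.
Qed.

Lemma is_cliqueP G S : is_clique G S -> forall i j, i \in S -> j \in S -> i != j -> G i j.
Proof.
move=> /forallP H i j iS jS ij.
by move: (H i); rewrite iS /= => /forallP /(_ j); rewrite jS ij.
Qed.

Lemma is_cliqueI G S : (forall i j, i \in S -> j \in S -> i != j -> G i j) -> is_clique G S.
Proof.
move=> H; apply/forallP => i; apply/implyP => iS; apply/forallP => j.
by apply/implyP => jS; apply/implyP => ij; apply: H.
Qed.

Lemma omega_ge G S : is_clique G S -> (#|S| <= omega G)%N.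
Proof. by move=> cS; exact: (@leq_bigmax_cond _ (fun S => is_clique G S) (fun S => #|S|) S cS). Qed.

Lemma omega_le G j : (forall S, is_clique G S -> (#|S| <= j)%N) -> (omega G <= j)%N.
Proof. by move=> H; apply/bigmax_leqP. Qed.

Lemma omega_pos G : (0 < n)%N -> (0 < omega G)%N.
Proof.
move=> n0; pose i := Ordinal n0.
have : is_clique G [set i].
  by apply: is_cliqueI => x y; rewrite !inE => /eqP-> /eqP->; rewrite eqxx.
by move/omega_ge; rewrite cards1.
Qed.

End Graphs.

Lemma leq_expl a b e : (a <= b)%N -> (a ^ e <= b ^ e)%N.
Proof. by move=> ab; elim: e => // e IH; rewrite !expnS leq_mul. Qed.

Lemma bin_le_exp a b : ('C(a, b) <= a ^ b)%N.
Proof.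
elim: a b => [|a IH] [|b] //; rewrite binS.
apply: leq_trans (leq_add (IH b.+1) (IH b)) _.
rewrite [in X in (_ <= X)%N]expnS mulSn addnC; apply: leq_add.
  exact: leq_expl.
by rewrite expnS leq_mul2l leq_expl ?orbT.
Qed.

Lemma lower_graph n j : (0 < n)%N -> (n < Ramsey j.+1 j.+1)%N ->
  exists G : {ffun 'I_n -> {ffun 'I_n -> bool}}, simple_graph G /\
    (n <= chi G * j)%N /\ (omega G <= j)%N.
Proof.
move=> n0 hn.
have nP : ~ ramsey_prop j.+1 j.+1 n.
  by move=> P; have := (Ramsey_spec j.+1 j.+1).2 n P; rewrite leqNgt hn.
have [c [csym noS]] : exists c : 'I_n -> 'I_n -> bool, (forall i j, c i j = c j i) /\
   forall S : {set 'I_n}, ~ ((#|S| = j.+1 /\ redc c S) \/ (#|S| = j.+1 /\ bluec c S)).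
  apply: contrapT => H; apply: nP => c csym; apply: contrapT => H2; apply: H.
  by exists c; split => // S HS; apply: H2; exists S.
pose G : {ffun 'I_n -> {ffun 'I_n -> bool}} := [ffun i => [ffun k => (i != k) && c i k]].
have sG : simple_graph G.
  rewrite /simple_graph; apply/andP; split; apply/forallP => i.
    by rewrite !ffunE eqxx.
  by apply/forallP => k; rewrite !ffunE (eq_sym k i) (csym k i).
exists G; split => //; split.
  apply: chi_lower => // S iS; rewrite leqNgt; apply/negP => hS.
  have [B [BS cB]] := subset_card hS.
  apply: (noS B); right; split => // x y xB yB xy.
  by move: (iS x y (subsetP BS x xB) (subsetP BS y yB)); rewrite !ffunE xy.
apply: omega_le => S cS; rewrite leqNgt; apply/negP => hS.
have [B [BS cB]] := subset_card hS.
apply: (noS B); left; split => // x y xB yB xy.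
by move: (is_cliqueP cS (subsetP BS x xB) (subsetP BS y yB) xy); rewrite !ffunE xy.
Qed.

Lemma greedy_chi n (G : {ffun 'I_n -> {ffun 'I_n -> bool}}) w t M :
  simple_graph G -> (0 < t)%N ->
  (forall S : {set 'I_n}, is_clique G S -> (#|S| <= w)%N) ->
  (forall U : {set 'I_n}, (M <= #|U|)%N -> exists S : {set 'I_n}, S \subset U /\
     ((#|S| = w.+1 /\ redc (fun i j => G i j) S) \/ (#|S| = t /\ bluec (fun i j => G i j) S))) ->
  (chi G * t <= n + M * t)%N.
Proof.
move=> sG tpos Hw HM.
have HI : forall U : {set 'I_n}, (M <= #|U|)%N ->
    exists I : {set 'I_n}, I \subset U /\ #|I| = t /\ indep G I.
  move=> U /HM [S [SU [[cS rS]|[cS bS]]]].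
    have := Hw S (is_cliqueI rS); rewrite cS ltnn //.
  exists S; split => //; split => // x y xS yS.
  have [->|xy] := eqVneq x y; first exact: simple_irr.
  exact: bS.
have [q [hq cq]] := col_greedy sG tpos HI [set: 'I_n].
rewrite cardsT card_ord in hq; apply: leq_trans hq.
by rewrite leq_mul2r (chi_le cq) orbT.
Qed.

Definition Pk (D k : nat) := ((D.+1 + k ^ 3) ^ D.+1 + (k ^ 2 + D.+2) ^ D.+1)%N.
Definition kpp (D k : nat) := (k + k %/ D + 1)%N.

Lemma kpp_sq D k w q : (0 < D)%N -> (D < w)%N -> (w * D <= k ^ 2)%N ->
  (q * w <= (k ^ 2).-1)%N -> (w.+1 * q.+1 <= kpp D k ^ 2)%N.
Proof.
move=> D0 Dw wD qw.
rewrite /kpp; set r := (k %/ D).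
have kr : (k < r.+1 * D)%N by apply: ltn_ceil.
have qD : (q * D <= k ^ 2)%N.
  apply: leq_trans (leq_trans qw (leq_pred _)); rewrite leq_mul2l ltnW ?orbT //.
rewrite -(@leq_pmul2l D) //.
have h1 : (D * (w.+1 * q.+1) <= D * k ^ 2 + D * w + D * q)%N.
  have : (w.+1 * q.+1 = q * w + w + q + 1)%N by nia.
  move=> ->; have : (q * w + 1 <= k ^ 2)%N.
    have k2 : (0 < k ^ 2)%N by apply: leq_trans wD; rewrite muln_gt0 (leq_ltn_trans _ Dw).
    by move: qw k2; case: (k ^ 2) => [|m] //= qw _; rewrite addn1.
  nia.
apply: leq_trans h1 _.
have h2 : (D * w + D * q <= 2 * k * (r.+1 * D))%N.
  have : (2 * k ^ 2 <= 2 * k * (r.+1 * D))%N.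
    by rewrite expnS expn1 mulnA leq_mul2l ltnW ?orbT.
  nia.
nia.
Qed.

Definition Hyp1 := forall s t k : nat, (0 < s)%N -> (0 < t)%N -> (0 < k)%N ->
     (s * t <= k ^ 2)%N -> (Ramsey s t <= Ramsey k k)%N.

Lemma upper_nat (H1 : Hyp1) n (G : {ffun 'I_n -> {ffun 'I_n -> bool}}) k D :
  simple_graph G -> (0 < n)%N -> (0 < k)%N -> (0 < D)%N ->
  exists t K M, [/\ (0 < t)%N, (chi G * t <= n + M * t)%N, (K <= t * omega G)%N,
     (K = k ^ 2 \/ K = k ^ 3) & (M <= Pk D k + Ramsey (kpp D k) (kpp D k))%N].
Proof.
move=> sG n0 k0 D0; set w := omega G.
have w0 : (0 < w)%N by apply: omega_pos.
have Hw : forall S : {set 'I_n}, is_clique G S -> (#|S| <= w)%N by move=> S; apply: omega_ge.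
have csym : forall i j, (fun i j => G i j) i j = (fun i j => G i j) j i by apply: simple_sym.
have [big|small] := leqP (k ^ 2) w.
  exists 1%N, (k ^ 2), 0%N; split.
  - by [].
  - rewrite muln1 mul0n addn0; have := chi_le (col_small [set: 'I_n] sG).
    by rewrite cardsT card_ord.
  - by rewrite mul1n.
  - by left.
  - by [].
have [wD|Dw] := leqP w D.
  have t0 : (0 < k ^ 3)%N by rewrite expn_gt0 k0.
  exists (k ^ 3), (k ^ 3), 'C(w.+1 + k ^ 3, w.+1); split.
  - by [].
  - apply: (greedy_chi sG _ Hw) => // U hU; exact: (@ramsey_set _ (fun i j => G i j) csym _ _ U hU).
  - by rewrite leq_pmulr.
  - by right.
  apply: leq_trans (leq_addr _ _); apply: leq_trans (leq_addr _ _).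
  apply: leq_trans (bin_le_exp _ _) _.
  apply: (@leq_trans ((D.+1 + k ^ 3) ^ w.+1)); first by apply: leq_expl; lia.
  by apply: leq_pexp2l; rewrite ?addn_gt0 //.
set q := ((k ^ 2).-1 %/ w)%N.
have k2 : (0 < k ^ 2)%N by rewrite expn_gt0 k0.
have qw : (q * w <= (k ^ 2).-1)%N by apply: leq_trunc_div.
have tw : (k ^ 2 <= q.+1 * w)%N.
  by have := ltn_ceil (k ^ 2).-1 w0; rewrite -/q prednK.
have [wkD|wkD] := leqP (w * D) (k ^ 2).
  exists q.+1, (k ^ 2), (Ramsey (kpp D k) (kpp D k)); split.
  - by [].
  - apply: (greedy_chi sG _ Hw) => // U hU; apply: Ramsey_use => //.
    apply: leq_trans hU; apply: H1 => //; first by rewrite /kpp addn1.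
    exact: kpp_sq.
  - by [].
  - by left.
  - by apply: leq_addl.
have qD : (q < D)%N.
  rewrite -(@ltn_pmul2r w) //; apply: leq_ltn_trans qw _.
  by move: wkD k2; rewrite mulnC; lia.
exists q.+1, (k ^ 2), 'C(w.+1 + q.+1, w.+1); split.
- by [].
- by apply: (greedy_chi sG _ Hw) => // U hU; exact: (@ramsey_set _ (fun i j => G i j) csym _ _ U hU).
- by [].
- by left.
apply: leq_trans (leq_addr _ _); apply: leq_trans (leq_addl _ _).
rewrite -bin_sub ?leq_addr // addKn.
apply: leq_trans (bin_le_exp _ _) _.
apply: (@leq_trans ((k ^ 2 + D.+2) ^ q.+1)); first by apply: leq_expl; lia.
by apply: leq_pexp2l; rewrite ?addn_gt0 ?k2 //; lia.
Qed.

From mathcomp Require Import classical_sets reals topology normedtype sequences exp.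
From mathcomp Require Import ring lra.
Import Order.TTheory GRing.Theory Num.Theory numFieldNormedType.Exports.
Local Open Scope classical_set_scope.
Local Open Scope ring_scope.

Lemma ratio_bound (R : realType) (c w t n M K : nat) :
  (0 < t)%N -> (0 < w)%N -> (0 < K)%N -> (c * t <= n + M * t)%N -> (K <= t * w)%N ->
  (c%:R / w%:R : R) <= n%:R / K%:R + M%:R.
Proof.
move=> t0 w0 K0 h1 h2.
have h1' : (c%:R * t%:R <= n%:R + M%:R * t%:R :> R) by rewrite -!natrM -natrD ler_nat.
have h2' : (K%:R <= t%:R * w%:R :> R) by rewrite -natrM ler_nat.
have t0' : (0 < t%:R :> R) by rewrite ltr0n.
have w1 : (1 <= w%:R :> R) by rewrite ler1n.
have K0' : (0 < K%:R :> R) by rewrite ltr0n.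
have n0 : (0 <= n%:R :> R) by [].
have M0 : (0 <= M%:R :> R) by [].
set a := n%:R / K%:R.
have ha : n%:R <= a * (t%:R * w%:R).
  by rewrite /a mulrAC ler_pdivlMr // ler_wpM2l.
rewrite ler_pdivrMr ?(lt_le_trans ltr01 w1) //.
rewrite -(ler_pM2r t0').
have : M%:R * t%:R <= M%:R * t%:R * w%:R :> R by rewrite ler_peMr // mulr_ge0.
nra.
Qed.

Lemma upper_real (R : realType) (H1 : Hyp1) n (G : {ffun 'I_n -> {ffun 'I_n -> bool}}) k D :
  simple_graph G -> (0 < n)%N -> (0 < k)%N -> (0 < D)%N ->
  ((chi G)%:R / (omega G)%:R : R) <=
    n%:R / (k ^ 2)%:R + n%:R / (k ^ 3)%:R + (Pk D k)%:R + (Ramsey (kpp D k) (kpp D k))%:R.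
Proof.
move=> sG n0 k0 D0.
have [t [K [M [t0 hc hK hKk hM]]]] := upper_nat H1 sG n0 k0 D0.
have K0 : (0 < K)%N by case: hKk => ->; rewrite expn_gt0 k0.
apply: le_trans (ratio_bound R t0 (omega_pos G n0) K0 hc hK) _.
have hM' : (M%:R <= (Pk D k)%:R + (Ramsey (kpp D k) (kpp D k))%:R :> R) by rewrite -natrD ler_nat.
have e2 : (0 <= n%:R / (k ^ 2)%:R :> R) by rewrite divr_ge0.
have e3 : (0 <= n%:R / (k ^ 3)%:R :> R) by rewrite divr_ge0.
case: hKk => ->; lra.
Qed.

Lemma fratio_ge (R : realType) n (G : {ffun 'I_n -> {ffun 'I_n -> bool}}) :
  simple_graph G -> ((chi G)%:R / (omega G)%:R : R) <= fratio R n.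
Proof.
move=> sG; rewrite /fratio.
exact: (@le_bigmax_cond _ _ _ (0 : R) G (fun G => simple_graph G) (fun G => (chi G)%:R / (omega G)%:R) sG).
Qed.

Lemma fratio_le (R : realType) n (B : R) : 0 <= B ->
  (forall G : {ffun 'I_n -> {ffun 'I_n -> bool}}, simple_graph G -> (chi G)%:R / (omega G)%:R <= B) ->
  fratio R n <= B.
Proof. by move=> B0 H; rewrite /fratio; apply: bigmax_le. Qed.

Lemma fratio_ge0 (R : realType) n : 0 <= fratio R n.
Proof.
pose G0 : {ffun 'I_n -> {ffun 'I_n -> bool}} := [ffun i => [ffun j => false]].
have sG : simple_graph G0.
  by apply/andP; split; apply/forallP => i; rewrite ?ffunE //; apply/forallP => j; rewrite !ffunE.
by apply: le_trans (fratio_ge R sG); rewrite divr_ge0.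
Qed.

Lemma ivt_nat (g : nat -> nat) a b m : (a <= b)%N -> (g a <= m)%N -> (m < g b)%N ->
  exists j, [/\ (a <= j)%N, (j < b)%N, (g j <= m)%N & (m < g j.+1)%N].
Proof.
move=> ab; elim: b ab => [|b IH]; first by rewrite leqn0 => /eqP-> ga gb; rewrite ltnNge ga in gb.
rewrite leq_eqVlt => /orP[/eqP-> ga gb|]; first by rewrite ltnNge ga in gb.
rewrite ltnS => ab ga hb.
have [gb|gb] := leqP (g b) m.
  by exists b; split.
have [j [h1 h2 h3 h4]] := IH ab ga gb.
by exists j; split => //; rewrite ltnS ltnW.
Qed.

Lemma nearE (P : nat -> Prop) : (\forall n \near \oo, P n) <-> exists N, forall n, (N <= n)%N -> P n.
Proof.
split.
  by case=> N _ HN; exists N => n hn; apply: HN.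
by case=> N HN; exists N => // n /= hn; apply: HN.
Qed.

Lemma poly_small (R : realType) (c e A : R) (p : nat) : 0 < c -> 0 < e -> 0 <= A ->
  exists K : nat, forall k : nat, (K <= k)%N -> A * (k.+1%:R) ^+ p <= e * expR (c * k%:R).
Proof.
move=> c0 e0 A0.
set F := (p.+1)`!%:R : R.
have F0 : 0 < F by rewrite ltr0n fact_gt0.
set B := A * 2 ^+ p * F.
have ec0 : 0 < e * c ^+ p.+1 by rewrite mulr_gt0 // exprn_gt0.
exists (Num.truncn (B / (e * c ^+ p.+1))).+1 => k hk.
have k1 : (1 <= k%:R :> R) by rewrite ler1n; apply: leq_trans hk.
have k0 : (0 < k%:R :> R) by apply: lt_le_trans k1.
have hB : B <= e * c ^+ p.+1 * k%:R.
  have B0 : 0 <= B by rewrite /B !mulr_ge0 // ?exprn_ge0 // ltW.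
  have := truncnS_gt (B / (e * c ^+ p.+1)).
  rewrite ltr_pdivrMr // => h; apply/ltW/(lt_le_trans h).
  by rewrite mulrC ler_pM2l // ler_nat.
have h1 : A * (k.+1%:R) ^+ p <= A * 2 ^+ p * k%:R ^+ p.
  rewrite -mulrA -exprMn ler_wpM2l //; apply: lerXn2r; rewrite ?nnegrE ?mulr_ge0 //.
  by rewrite -addn1 natrD; lra.
have h2 : e * ((c * k%:R) ^+ p.+1 / F) <= e * expR (c * k%:R).
  rewrite ler_pM2l //.
  have := @expR_ge1Dxn R (c * k%:R) p (mulr_ge0 (ltW c0) (ltW k0)); rewrite -/F; lra.
apply: le_trans h1 (le_trans _ h2).
rewrite mulrA ler_pdivlMr //.
have -> : A * 2 ^+ p * k%:R ^+ p * F = B * k%:R ^+ p by rewrite /B; ring.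
have -> : e * (c * k%:R) ^+ p.+1 = (e * c ^+ p.+1 * k%:R) * k%:R ^+ p.
  by rewrite exprMn [k%:R ^+ p.+1]exprS; ring.
by rewrite ler_wpM2r // exprn_ge0 // ltW.
Qed.

Lemma log2_nat_ge0 (R : realType) n : 0 <= log2 (n%:R : R).
Proof.
rewrite /log2 divr_ge0 //; last by apply: ln_ge0; rewrite ler1n.
by case: n => [|n]; [rewrite ln0 | apply: ln_ge0; rewrite ler1n].
Qed.

Lemma ln2_gt0 (R : realType) : 0 < ln (2 : R).
Proof. by apply: ln_gt0; rewrite ltr1n. Qed.

Lemma lowerB (R : realType) (L : R)
  (H2e : forall η, 0 < η -> exists K, forall k, (K <= k)%N ->
      `|L - log2 ((Ramsey k k)%:R : R) / k%:R| <= η)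
  (L0 : 0 <= L) e (e0 : 0 < e) :
  exists N, forall n, (N <= n)%N ->
    L ^+ 2 - e <= (log2 (n%:R : R)) ^+ 2 / n%:R * fratio R n.
Proof.
have u0 : forall n, 0 <= (log2 (n%:R : R)) ^+ 2 / n%:R * fratio R n.
  by move=> n; rewrite mulr_ge0 ?divr_ge0 ?exprn_ge0 ?log2_nat_ge0 ?fratio_ge0.
have [->|Lne] := eqVneq L 0.
  by exists 0%N => n _; have := u0 n; rewrite expr0n /=; lra.
have Lp : 0 < L by rewrite lt_neqAle eq_sym Lne.
set lam := ln (2 : R); have lam0 : 0 < lam := ln2_gt0 R.
set η := Num.min (L / 2) (e / (2 * L)).
have η0 : 0 < η by rewrite lt_min !divr_gt0 ?mulr_gt0.
have ηL : η <= L / 2 by rewrite ge_min lexx.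
have ηe : η <= e / (2 * L) by rewrite ge_min lexx orbT.
have [K HK] := H2e η η0.
set K1 := maxn K 1.
have rl : forall k, (K1 <= k)%N -> lam * (L - η) * k%:R <= ln ((Ramsey k k)%:R : R).
  move=> k hk; have k0 : (0 < k%:R :> R) by rewrite ltr0n; apply: leq_trans hk; rewrite leq_maxr.
  have := HK k (leq_trans (leq_maxl _ _) hk); rewrite ler_distl => /andP[_ h].
  have h' : L - η <= log2 ((Ramsey k k)%:R : R) / k%:R by lra.
  move: h'; rewrite ler_pdivlMr // /log2 ler_pdivlMr // => h'.
  by have -> : lam * (L - η) * k%:R = (L - η) * k%:R * lam by ring.
have rpos : forall k, (K1 <= k)%N -> 0 < ln ((Ramsey k k)%:R : R).
  move=> k hk; apply: lt_le_trans (rl k hk).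
  have k0 : (0 < k%:R :> R) by rewrite ltr0n; apply: leq_trans hk; rewrite leq_maxr.
  by rewrite !mulr_gt0 // subr_gt0; lra.
have rexp : forall k, (K1 <= k)%N -> expR (lam * (L - η) * k%:R) <= (Ramsey k k)%:R.
  move=> k hk; have := rpos k hk => h.
  have r0 : (0 < (Ramsey k k)%:R :> R).
    rewrite lt_neqAle ler0n andbT; apply/negP => /eqP r0.
    by move: h; rewrite -r0 ln0 ?ltxx.
  by rewrite -[X in _ <= X](lnK r0) ler_expR; apply: rl.
exists (Ramsey K1 K1) => n hn.
have [j' [hj1 hj2]] : exists j', (K1 <= j')%N /\ (n < Ramsey j' j')%N.
  set c := lam * (L - η); have c0 : 0 < c by rewrite mulr_gt0 // subr_gt0; lra.
  exists (maxn K1 (Num.truncn (n%:R / c)).+1); split; first exact: leq_maxl.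
  set j' := maxn _ _.
  have := rexp j' (leq_maxl _ _) => h.
  rewrite -(ltr_nat R); apply: lt_le_trans h.
  apply: lt_le_trans (expR_ge1Dx _); rewrite -/c.
  have : n%:R / c < j'%:R.
    apply: lt_le_trans (truncnS_gt _) _; rewrite ler_nat; exact: leq_maxr.
  rewrite ltr_pdivrMr // => h2; lra.
have [j [h1 h2 h3 h4]] := @ivt_nat (fun k => Ramsey k k) K1 j' n hj1 hn hj2.
have j1 : (0 < j)%N by apply: leq_trans h1; rewrite leq_maxr.
have n0 : (0 < n)%N.
  rewrite lt0n; apply/negP => /eqP n0; move: h3; rewrite n0 leqn0 => /eqP r0.
  by move: (rpos j h1); rewrite /= r0 ln0 ?ltxx.
have [G [sG [hchi hom]]] := @lower_graph n j n0 h4.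
have hf := fratio_ge R sG.
have jR : (0 < j%:R :> R) by rewrite ltr0n.
have nR : (0 < n%:R :> R) by rewrite ltr0n.
have w0 := omega_pos G n0.
have wR : (1 <= (omega G)%:R :> R) by rewrite ler1n.
have wJ : ((omega G)%:R <= j%:R :> R) by rewrite ler_nat.
have hc : (n%:R <= (chi G)%:R * j%:R :> R) by rewrite -natrM ler_nat.
have f1 : n%:R / (j%:R ^+ 2) <= fratio R n.
  apply: le_trans hf.
  rewrite ler_pdivrMr ?exprn_gt0 // mulrAC ler_pdivlMr ?(lt_le_trans ltr01 wR) //.
  have c0 : (0 <= (chi G)%:R :> R) by [].
  nra.
have rj0 : (0 < (Ramsey j j)%:R :> R).
  rewrite lt_neqAle ler0n andbT; apply/negP => /eqP r0.
  by move: (rpos j h1); rewrite -r0 ln0 ?ltxx.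
have x1 : (L - η) * j%:R <= log2 (n%:R : R).
  rewrite /log2 ler_pdivlMr //.
  have -> : (L - η) * j%:R * lam = lam * (L - η) * j%:R by ring.
  apply: le_trans (rl j h1) _.
  by rewrite ler_ln ?posrE // ler_nat.
set x := log2 (n%:R : R) in x1 *.
have Lη : 0 <= L - η by lra.
have x0 : 0 <= (L - η) * j%:R by rewrite mulr_ge0 // ltW.
have h5 : x ^+ 2 / n%:R * (n%:R / j%:R ^+ 2) <= x ^+ 2 / n%:R * fratio R n.
  by apply: ler_wpM2l => //; rewrite divr_ge0 ?sqr_ge0 // ltW.
apply: le_trans h5.
have -> : x ^+ 2 / n%:R * (n%:R / j%:R ^+ 2) = (x / j%:R) ^+ 2.
  by field; rewrite ?lt0r_neq0.
have h6 : L - η <= x / j%:R by rewrite ler_pdivlMr.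
have h7 : (L - η) ^+ 2 <= (x / j%:R) ^+ 2 by apply: lerXn2r; rewrite ?nnegrE //; lra.
have h8 : 2 * L * η <= e.
  by move: ηe; rewrite ler_pdivlMr ?mulr_gt0 // mulrC.
nra.
Qed.

Lemma Pk_bound D k : ((k.+1) ^ 2 * Pk D k <= 2 * (D.+2) ^ D.+1 * k.+1 ^ (3 * D.+1 + 2))%N.
Proof.
have h1 : (D.+1 + k ^ 3 <= D.+2 * k.+1 ^ 3)%N.
  have : (k ^ 3 < k.+1 ^ 3)%N by rewrite ltn_exp2r.
  have : (1 <= k.+1 ^ 3)%N by rewrite expn_gt0.
  nia.
have h2 : (k ^ 2 + D.+2 <= D.+2 * k.+1 ^ 3)%N.
  have : (k ^ 2 <= k.+1 ^ 3)%N.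
    by apply: leq_trans (leq_pexp2l _ (_ : 2 <= 3)%N) => //; rewrite leq_expl.
  have : (1 <= k.+1 ^ 3)%N by rewrite expn_gt0.
  nia.
have h3 : forall y, (y <= D.+2 * k.+1 ^ 3)%N -> (y ^ D.+1 <= D.+2 ^ D.+1 * k.+1 ^ (3 * D.+1))%N.
  by move=> y hy; rewrite expnM -expnMn; apply: leq_expl.
have hP : (Pk D k <= 2 * (D.+2 ^ D.+1 * k.+1 ^ (3 * D.+1)))%N.
  by rewrite /Pk mul2n -addnn leq_add // h3.
rewrite expnD; move: hP; set P := Pk D k; set Y := (D.+2 ^ D.+1)%N; set Z := (k.+1 ^ (3 * D.+1))%N.
set X := (k.+1 ^ 2)%N; nia.
Qed.

Lemma T12 (R : realType) (a e x : R) (k : nat) : 0 < a -> 0 < e ->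
  ((Num.truncn (48 * a ^+ 2 / e)).+1 <= k)%N -> 0 <= x -> x <= a * k.+1%:R ->
  x ^+ 2 / (k ^ 2)%:R + x ^+ 2 / (k ^ 3)%:R <= a ^+ 2 + e / 3.
Proof.
move=> a0 e0 hk x0 xa.
have k1 : (1 <= k%:R :> R) by rewrite ler1n; apply: leq_trans hk.
have k0 : (0 < k%:R :> R) by apply: lt_le_trans k1.
have hk' : 48 * a ^+ 2 / e <= k%:R.
  by apply/ltW/(lt_le_trans (truncnS_gt _)); rewrite ler_nat.
move: hk'; rewrite ler_pdivrMr // => hk'.
have x2 : x ^+ 2 <= a ^+ 2 * (k%:R + 1) ^+ 2.
  have xa' : x <= a * (k%:R + 1) by move: xa; rewrite -addn1 natrD.
  rewrite -exprMn; apply: lerXn2r => //; rewrite nnegrE; lra.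
rewrite !natrX.
have -> : x ^+ 2 / k%:R ^+ 2 + x ^+ 2 / k%:R ^+ 3 = x ^+ 2 * (k%:R + 1) / k%:R ^+ 3.
  by field; rewrite lt0r_neq0.
rewrite ler_pdivrMr ?exprn_gt0 //.
have a2 : 0 <= a ^+ 2 by apply: sqr_ge0.
have : x ^+ 2 * (k%:R + 1) <= a ^+ 2 * (k%:R + 1) ^+ 3.
  have -> : a ^+ 2 * (k%:R + 1) ^+ 3 = a ^+ 2 * (k%:R + 1) ^+ 2 * (k%:R + 1) by ring.
  by apply: ler_wpM2r => //; lra.
move=> h; apply: le_trans h _.
(* a^2 (k+1)^3 <= (a^2 + e/3) k^3 *)
set K := k%:R in k1 hk' *.
have : a ^+ 2 * (3 * K ^+ 2 + 3 * K + 1) <= e / 3 * K ^+ 3.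
  have hA : a ^+ 2 * (3 * K ^+ 2 + 3 * K + 1) <= a ^+ 2 * (7 * K ^+ 2).
    by apply: ler_wpM2l => //; nra.
  apply: le_trans hA _.
  have : 48 * a ^+ 2 * K ^+ 2 <= e * K * K ^+ 2.
    by apply: ler_wpM2r; [apply: sqr_ge0 | nra].
  nra.
have -> : (K + 1) ^+ 3 = K ^+ 3 + (3 * K ^+ 2 + 3 * K + 1) by ring.
nra.
Qed.

Lemma kpp_exp (R : realType) (L η : R) D k : 0 < η -> 0 <= L -> (0 < D)%N ->
  (L + η) / D%:R <= η / 2 ->
  (L + η) * (kpp D k)%:R <= (L + η) + (L + 2 * η) * k%:R - η / 2 * k%:R.
Proof.
move=> η0 L0 D0 hD.
have DR : (0 < D%:R :> R) by rewrite ltr0n.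
have q1 : ((k %/ D)%:R * D%:R <= k%:R :> R) by rewrite -natrM ler_nat leq_trunc_div.
have q2 : (L + η) * (k %/ D)%:R <= η / 2 * k%:R.
  have : (L + η) * (k %/ D)%:R * D%:R <= (L + η) * k%:R.
    by rewrite -mulrA ler_wpM2l //; lra.
  move: hD; rewrite ler_pdivrMr // => hD h.
  rewrite -(ler_pM2r DR); apply: le_trans h _.
  have k0 : (0 <= k%:R :> R) by [].
  nra.
rewrite /kpp !natrD; lra.
Qed.

Lemma upperA (R : realType) (L : R) (H1 : Hyp1)
  (H2e : forall η, 0 < η -> exists K, forall k, (K <= k)%N ->
      `|L - log2 ((Ramsey k k)%:R : R) / k%:R| <= η)
  (L0 : 0 <= L) e (e0 : 0 < e) :
  exists N, forall n, (N <= n)%N ->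
    (log2 (n%:R : R)) ^+ 2 / n%:R * fratio R n <= L ^+ 2 + e.
Proof.
set lam := ln (2 : R); have lam0 : 0 < lam := ln2_gt0 R.
set η := Num.min 1 (e / (8 * (L + 1))).
have η0 : 0 < η by rewrite lt_min ltr01 divr_gt0 // mulr_gt0 //; lra.
have η1 : η <= 1 by rewrite ge_min lexx.
have ηe : 8 * (L + 1) * η <= e.
  have : η <= e / (8 * (L + 1)) by rewrite ge_min lexx orbT.
  by rewrite ler_pdivlMr ?mulr_gt0 //; [rewrite mulrC | lra].
set a := L + 2 * η.
have a0 : 0 < a by rewrite /a; lra.
have aa : a ^+ 2 <= L ^+ 2 + e / 2 by rewrite /a; nra.
set D := (Num.truncn (2 * (L + η) / η)).+1.
have D0 : (0 < D)%N by [].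
have hD : (L + η) / D%:R <= η / 2.
  have DR : (0 < D%:R :> R) by rewrite ltr0n.
  have := truncnS_gt (2 * (L + η) / η); rewrite -/D ltr_pdivrMr // => h.
  rewrite ler_pdivrMr //; lra.
have [K HK] := H2e η η0.
have rup : forall k, (K <= k)%N -> (0 < k)%N ->
    (Ramsey k k)%:R <= expR (lam * (L + η) * k%:R) :> R.
  move=> k hk k0; have k0' : (0 < k%:R :> R) by rewrite ltr0n.
  have := HK k hk; rewrite ler_distl => /andP[h _].
  have h' : log2 ((Ramsey k k)%:R : R) / k%:R <= L + η by lra.
  move: h'; rewrite ler_pdivrMr // /log2 ler_pdivrMr // => h'.
  have [r0|r0] := eqVneq (Ramsey k k) 0%N; first by rewrite r0 ltW ?expR_gt0.
  have r0' : (0 < (Ramsey k k)%:R :> R) by rewrite ltr0n lt0n.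
  rewrite -(lnK r0') ler_expR.
  by have -> : lam * (L + η) * k%:R = (L + η) * k%:R * lam by ring.
have e12 : 0 < e / 12 by rewrite divr_gt0.
have [K3 HK3] := @poly_small R (lam * a) (e / 12) (a ^+ 2 * (2 * (D.+2) ^ D.+1)%:R)
   (3 * D.+1 + 2) (mulr_gt0 lam0 a0) e12 (mulr_ge0 (sqr_ge0 _) (ler0n _ _)).
have lη : 0 < lam * η / 2 by rewrite divr_gt0 // mulr_gt0.
have [K4 HK4] := @poly_small R (lam * η / 2) (e / 12) (a ^+ 2 * expR (lam * (L + η)))
   2 lη e12 (mulr_ge0 (sqr_ge0 _) (ltW (expR_gt0 _))).
set K12 := (Num.truncn (48 * a ^+ 2 / e)).+1.
set Ks := maxn (maxn K 1) (maxn K12 (maxn K3 K4)).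
exists (Num.truncn (expR (lam * a * Ks%:R))).+1 => n hn.
have nR : expR (lam * a * Ks%:R) < n%:R.
  by apply: lt_le_trans (truncnS_gt _) _; rewrite ler_nat.
have nR0 : 0 < n%:R :> R by apply: lt_trans nR; apply: expR_gt0.
set x := log2 (n%:R : R).
have hx : a * Ks%:R <= x.
  rewrite /x /log2 ler_pdivlMr //.
  have h : lam * a * Ks%:R <= ln n%:R by rewrite -ler_expR lnK ?posrE // ltW.
  by have -> : a * Ks%:R * lam = lam * a * Ks%:R by ring.
have Ks0 : (0 <= Ks%:R :> R) by [].
have x0 : 0 <= x by apply: le_trans hx; rewrite mulr_ge0 // ltW.
have xa0 : 0 <= x / a by rewrite divr_ge0 // ltW.
set k := Num.truncn (x / a).
have [hk1 hk2] := andP (truncn_itv xa0); rewrite -/k in hk1 hk2.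
have kKs : (Ks <= k)%N by rewrite /k truncn_ge_nat // ler_pdivlMr // mulrC.
have kK : (K <= k)%N by apply: leq_trans kKs; rewrite /Ks !leq_max leqnn.
have k1 : (0 < k)%N by apply: leq_trans kKs; rewrite /Ks !leq_max leqnn orbT.
have kK12 : (K12 <= k)%N by apply: leq_trans kKs; rewrite /Ks !leq_max leqnn !orbT.
have kK3 : (K3 <= k)%N by apply: leq_trans kKs; rewrite /Ks !leq_max leqnn !orbT.
have kK4 : (K4 <= k)%N by apply: leq_trans kKs; rewrite /Ks !leq_max leqnn !orbT.
have xk1 : a * k%:R <= x by move: hk1; rewrite ler_pdivlMr // mulrC.
have xk2 : x <= a * k.+1%:R by move: hk2; rewrite ltr_pdivrMr // mulrC => /ltW.
have n0 : (0 < n)%N by rewrite -(ltr0n R).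
have nexp : expR (lam * a * k%:R) <= n%:R.
  rewrite -(lnK nR0) ler_expR.
  have : x * lam = ln n%:R by rewrite /x /log2 (divfK (lt0r_neq0 lam0)).
  move=> <-; have -> : lam * a * k%:R = a * k%:R * lam by ring.
  by rewrite ler_pM2r.
set P := (Pk D k)%:R : R.
set r2 := (Ramsey (kpp D k) (kpp D k))%:R : R.
set B := n%:R / (k ^ 2)%:R + n%:R / (k ^ 3)%:R + P + r2.
have B0 : 0 <= B by rewrite /B !addr_ge0 // divr_ge0.
have hf : fratio R n <= B.
  by apply: fratio_le => // G sG; apply: upper_real.
have hu : x ^+ 2 / n%:R * fratio R n <= x ^+ 2 / n%:R * B.
  by apply: ler_wpM2l => //; rewrite divr_ge0 ?sqr_ge0 // ltW.
apply: le_trans hu _.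
have kR : (0 < k%:R :> R) by rewrite ltr0n.
have -> : x ^+ 2 / n%:R * B = (x ^+ 2 / (k ^ 2)%:R + x ^+ 2 / (k ^ 3)%:R) + (x ^+ 2 * P + x ^+ 2 * r2) / n%:R.
  rewrite /B !natrX; field; rewrite ?lt0r_neq0 //.
have hT := T12 a0 e0 kK12 x0 xk2.
have x2 : x ^+ 2 <= a ^+ 2 * (k.+1%:R) ^+ 2.
  by rewrite -exprMn; apply: lerXn2r => //; rewrite nnegrE mulr_ge0 // ltW.
have P0 : 0 <= P by [].
have r20 : 0 <= r2 by [].
have a2 : 0 <= a ^+ 2 by apply: sqr_ge0.
have b3 : x ^+ 2 * P <= e / 12 * n%:R.
  have hP : k.+1%:R ^+ 2 * P <= (2 * (D.+2) ^ D.+1)%:R * k.+1%:R ^+ (3 * D.+1 + 2).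
    by rewrite /P -!natrX -!natrM ler_nat Pk_bound.
  have h3 := HK3 k kK3.
  apply: le_trans (ler_wpM2r P0 x2) _.
  have s : a ^+ 2 * k.+1%:R ^+ 2 * P <= a ^+ 2 * (2 * D.+2 ^ D.+1)%:R * k.+1%:R ^+ (3 * D.+1 + 2).
    have -> : a ^+ 2 * k.+1%:R ^+ 2 * P = a ^+ 2 * (k.+1%:R ^+ 2 * P) by ring.
    set C := (2 * D.+2 ^ D.+1)%:R : R; set Q := k.+1%:R ^+ (3 * D.+1 + 2) : R.
    have -> : a ^+ 2 * C * Q = a ^+ 2 * (C * Q) by ring.
    apply: (ler_wpM2l a2).
    exact: hP.
  apply: le_trans s _.
  apply: le_trans h3 _.
  by apply: ler_wpM2l => //; apply: ltW.
have b4 : x ^+ 2 * r2 <= e / 12 * n%:R.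
  have kpk : (K <= kpp D k)%N by apply: leq_trans kK _; rewrite /kpp -addnA leq_addr.
  have kp0 : (0 < kpp D k)%N by rewrite /kpp addn1.
  have hr := rup (kpp D k) kpk kp0.
  have hk := kpp_exp k η0 L0 D0 hD.
  set E1 := expR (lam * (L + η)); set Ea := expR (lam * a * k%:R).
  set Eh := expR (lam * η / 2 * k%:R).
  have Eh0 : 0 < Eh by apply: expR_gt0.
  have hr2 : r2 * Eh <= E1 * Ea.
    apply: le_trans (ler_wpM2r (ltW Eh0) hr) _.
    rewrite /E1 /Ea /Eh -!expRD ler_expR.
    have : lam * ((L + η) * (kpp D k)%:R) <= lam * ((L + η) + (L + 2 * η) * k%:R - η / 2 * k%:R).
      by rewrite ler_pM2l.
    rewrite /a; move=> h; apply: le_trans (_ : _ <= lam * ((L + η) + (L + 2 * η) * k%:R - η / 2 * k%:R) + lam * η / 2 * k%:R) _.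
      by rewrite lerD2r; apply: le_trans h; rewrite mulrA.
    by rewrite le_eqVlt; apply/orP; left; apply/eqP; ring.
  have h4 := HK4 k kK4; rewrite -/E1 -/Eh in h4.
  rewrite -(ler_pM2r Eh0).
  have s1 : x ^+ 2 * r2 * Eh <= a ^+ 2 * k.+1%:R ^+ 2 * (r2 * Eh).
    by rewrite -mulrA ler_wpM2r // mulr_ge0 // ltW.
  apply: le_trans s1 _.
  have s2 : a ^+ 2 * k.+1%:R ^+ 2 * (r2 * Eh) <= a ^+ 2 * k.+1%:R ^+ 2 * (E1 * Ea).
    by rewrite ler_wpM2l // mulr_ge0 // exprn_ge0.
  apply: le_trans s2 _.
  have s3 : a ^+ 2 * k.+1%:R ^+ 2 * (E1 * Ea) <= e / 12 * Eh * Ea.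
    have -> : a ^+ 2 * k.+1%:R ^+ 2 * (E1 * Ea) = a ^+ 2 * E1 * k.+1%:R ^+ 2 * Ea by ring.
    by rewrite ler_wpM2r // ltW // expR_gt0.
  apply: le_trans s3 _.
  have -> : e / 12 * n%:R * Eh = e / 12 * Eh * n%:R by ring.
  by rewrite ler_wpM2l // mulr_ge0 // ltW.
have b34 : (x ^+ 2 * P + x ^+ 2 * r2) / n%:R <= e / 6.
  by rewrite ler_pdivrMr //; lra.
lra.
Qed.

Lemma log2_ratio_ge0 (R : realType) k : 0 <= log2 ((Ramsey k k)%:R : R) / k%:R.
Proof. by rewrite divr_ge0 // log2_nat_ge0. Qed.

Unset Implicit Arguments.
Set Strict Implicit.

Theorem theorem1p2 (R : realType) (L : R) :
  (forall s t k : nat, (0 < s)%N -> (0 < t)%N -> (0 < k)%N ->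
     (s * t <= k ^ 2)%N -> (Ramsey s t <= Ramsey k k)%N) ->
  (fun k : nat => log2 ((Ramsey k k)%:R : R) / k%:R) @ \oo --> L ->
  (fun n : nat => (log2 (n%:R : R)) ^+ 2 / n%:R * fratio R n) @ \oo --> L ^+ 2.
Proof.
move=> H1' H2.
have H1 : Hyp1 := H1'.
have H2e : forall η, 0 < η -> exists K, forall k, (K <= k)%N ->
      `|L - log2 ((Ramsey k k)%:R : R) / k%:R| <= η.
  move=> η η0; move/cvgrPdist_le: H2 => /(_ η η0) /nearE.
  by [].
have L0 : 0 <= L.
  rewrite leNgt; apply/negP => Lneg.
  have η0 : 0 < - L / 2 by rewrite divr_gt0 // oppr_gt0.
  have [K HK] := H2e _ η0.
  have := HK K (leqnn K); rewrite ler_distl => /andP[h _].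
  have := log2_ratio_ge0 R K; lra.
apply/cvgrPdist_le => e e0.
have [NA HA] := upperA H1 H2e L0 e0.
have [NB HB] := lowerB H2e L0 e0.
apply/nearE; exists (maxn NA NB) => n hn.
have hA := HA n (leq_trans (leq_maxl _ _) hn).
have hB := HB n (leq_trans (leq_maxr _ _) hn).
rewrite ler_distl; apply/andP; split; lra.
Qed.
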